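(* Let $\sigma\subseteq N_\mathbb{Q}$ be a pointed cone, let $\partial_{e,p}$ ($e\in M$, $p\in N$) be a non-zero homogeneous vector field on $X_\sigma$, and let $\tau\subseteq\sigma$ be a face. Then $\partial_{e,p}$ vanishes on the orbit closure $\overline{\mathcal{O}(\tau)}$ (i.e. $\partial_{e,p}(\mathbb{C}[\sigma^\vee_M])\subseteq I(\tau)$) if and only if: if $\partial_{e,p}$ is of type I: $p\in\mathrm{span}\,\tau$ or $\langle e,\rho\rangle>0$ for some $\rho\in\tau(1)$; if $\partial_{e,p}$ is of type II: $\langle e,\rho\rangle>0$ for some $\rho\in\tau(1)$.
   Context: $N$ is a lattice with dual $M$, pairing $\langle m,p\rangle$. $\sigma\subseteq N_\mathbb{Q}$ is a strongly convex rational polyhedral cone, $\sigma^\vee_M=\sigma^\vee\cap M$, $X_\sigma=\mathrm{Spec}\,\mathbb{C}[\sigma^\vee_M]$; for a face $\tau$, $\tau(1)$ is the set of primitive ray generators of $\tau$, $\mathcal{O}(\tau)$ is the corresponding torus orbit, and the ideal of its closure is $I(\tau)=\bigoplus_{m\in\sigma^\vee_M\setminus\tau^\perp}\mathbb{C}\chi^m$. $\partial_{e,p}$ is the derivation $\chi^m\mapsto\langle m,p\rangle\chi^{m+e}$; a homogeneous vector field on $X_\sigma$ is such a $\partial_{e,p}$ preserving $\mathbb{C}[\sigma^\vee_M]$, and (for $p\ne0$) this happens exactly when it is of Type I ($e\in\sigma^\vee_M$) or Type II (there is a ray $\rho_e\in\sigma(1)$ with $p\in\mathbb{Z}\rho_e$,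 $\langle e,\rho_e\rangle=-1$, $\langle e,\rho\rangle\ge0$ for all other $\rho\in\sigma(1)$). *)

(* Defs.v *)
(* Lattice N = Z^n and M = Z^n as row vectors 'rV[int]_n,
   pairing <m,p> = sum_i m_i p_i. *)
From mathcomp Require Import all_boot all_order all_algebra.
Set Implicit Arguments. Unset Strict Implicit. Unset Printing Implicit Defensive.
Import Order.TTheory GRing.Theory Num.Theory.
Local Open Scope ring_scope.

Definition lat (n : nat) := 'rV[int]_n.

Definition pairing n (m p : lat n) : int := \sum_(i < n) m 0 i * p 0 i.

Definition toQ n (v : lat n) : 'rV[rat]_n := map_mx (fun z : int => z%:~R) v.

Definition in_cone n (rays : seq (lat n)) (v : 'rV[rat]_n) : Prop :=
  exists c : lat n -> rat, (forall r, 0 <= c r) /\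
    v = \sum_(r <- rays) c r *: toQ r.

Definition primitive n (v : lat n) : Prop :=
  v != 0 /\ forall (k : int) (w : lat n), v = k *: w -> k = 1 \/ k = -1.

(* [rays] is exactly sigma(1) for the strongly convex rational cone
   sigma = cone(rays): distinct primitive vectors, none redundant, sigma pointed *)
Definition ray_data n (rays : seq (lat n)) : Prop :=
  [/\ uniq rays,
      forall r, r \in rays -> primitive r,
      forall r, r \in rays -> ~ in_cone (rem r rays) (toQ r) &
      forall v, in_cone rays v -> in_cone rays (- v) -> v = 0].

Definition in_dual n (rays : seq (lat n)) (m : lat n) : Prop :=
  forall r, r \in rays -> 0 <= pairing m r.

(* tau(1) for the face tau = sigma cap u^perp, u in sigma^vee_M
   (every face of sigma arises this way) *)
Definition face_rays n (rays : seq (lat n)) (u : lat n) : seq (lat n) :=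
  [seq r <- rays | pairing u r == 0].

Definition in_perp n (taurays : seq (lat n)) (m : lat n) : Prop :=
  forall r, r \in taurays -> pairing m r = 0.

Definition in_span n (taurays : seq (lat n)) (p : lat n) : Prop :=
  exists c : lat n -> rat, toQ p = \sum_(r <- taurays) c r *: toQ r.

(* d_{e,p} preserves C[sigma^vee_M]: d(chi^m) = <m,p> chi^(m+e) *)
Definition homogeneous n (rays : seq (lat n)) (e p : lat n) : Prop :=
  forall m, in_dual rays m -> pairing m p = 0 \/ in_dual rays (m + e).

(* the term c * chi^m' (c an integer coefficient, viewed in C) lies in
   I(tau) = span { chi^m | m in sigma^vee_M \ tau^perp } *)
Definition term_in_ideal n (rays taurays : seq (lat n)) (c : int) (m' : lat n)
  : Prop := c = 0 \/ (in_dual rays m' /\ ~ in_perp taurays m').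

(* d_{e,p}(C[sigma^vee_M]) subset I(tau); by linearity it suffices
   (and is necessary) that the image of each monomial chi^m lies in I(tau) *)
Definition vanishes_on_orbit n (rays taurays : seq (lat n)) (e p : lat n) : Prop :=
  forall m, in_dual rays m -> term_in_ideal rays taurays (pairing m p) (m + e).

Definition typeI n (rays : seq (lat n)) (e p : lat n) : Prop := in_dual rays e.

Definition typeII n (rays : seq (lat n)) (e p : lat n) : Prop :=
  exists2 re, re \in rays &
    [/\ exists k : int, p = k *: re,
        pairing e re = -1 &
        forall r, r \in rays -> r != re -> 0 <= pairing e r].

(* Main.v *)
Require Import Defs.
From mathcomp Require Import all_boot all_order all_algebra.
From mathcomp Require Import ring zify.
Import Order.TTheory GRing.Theory Num.Theory.
Local Open Scope ring_scope.


Lemma pairingDl (n : nat) (a b c : lat n) : pairing (a + b) c = pairing a c + pairing b c.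
Proof. rewrite /pairing -big_split /=; apply: eq_bigr => i _; rewrite !mxE; ring. Qed.
Lemma pairingZl (n : nat) (k : int) (a c : lat n) : pairing (k *: a) c = k * pairing a c.
Proof. rewrite /pairing mulr_sumr; apply: eq_bigr => i _; rewrite !mxE; ring. Qed.
Lemma pairingZr (n : nat) (k : int) (a c : lat n) : pairing a (k *: c) = k * pairing a c.
Proof. rewrite /pairing mulr_sumr; apply: eq_bigr => i _; rewrite !mxE; ring. Qed.
Lemma pairingNl (n : nat) (a c : lat n) : pairing (- a) c = - pairing a c.
Proof. rewrite /pairing -sumrN; apply: eq_bigr => i _; rewrite !mxE; ring. Qed.
Lemma pairing0l (n : nat) (c : lat n) : pairing 0 c = 0.
Proof. rewrite /pairing big1 // => i _; rewrite !mxE; ring. Qed.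

Definition dotQ {n : nat} (x y : 'rV[rat]_n) := \sum_i x 0 i * y 0 i.

Lemma pairing_dotQ (n : nat) (a c : lat n) : (pairing a c)%:~R = dotQ (toQ a) (toQ c).
Proof. rewrite /pairing rmorph_sum; apply: eq_bigr => i _; rewrite !mxE rmorphM. done. Qed.

Lemma dotQ_sum (n : nat) (x : 'rV[rat]_n) (s : seq (lat n)) (f : lat n -> rat) :
  dotQ x (\sum_(r <- s) f r *: toQ r) = \sum_(r <- s) f r * dotQ x (toQ r).
Proof.
elim: s => [|a s IH]; first by rewrite !big_nil /dotQ big1 // => i _; rewrite mxE mulr0.
rewrite !big_cons -IH /dotQ mulr_sumr -big_split; apply: eq_bigr => i _.
rewrite !mxE /= mulrDr mulrCA; congr (_ + _ * _); rewrite summxE.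
Qed.

Lemma span_perp (n : nat) (s : seq (lat n)) (m p : lat n) : in_span s p -> in_perp s m -> pairing m p = 0.
Proof.
move=> [c Hc] Hm; apply/eqP; rewrite -(intr_eq0 rat) pairing_dotQ Hc dotQ_sum.
rewrite big_seq big1 // => r Hr; by rewrite -pairing_dotQ Hm // mulr0.
Qed.

Lemma le_sum_abs (n : nat) (s : seq (lat n)) (f : lat n -> int) r :
  r \in s -> `|f r| <= \sum_(x <- s) `|f x|.
Proof.
elim: s => [//|a s IH]; rewrite in_cons big_cons => /orP [/eqP ->|/IH H].
  by rewrite lerDl sumr_ge0.
by apply: le_trans H _; rewrite lerDr.
Qed.

Lemma ratvec_scale (n : nat) (x : 'rV[rat]_n) :
  exists2 d : rat, d != 0 & exists w : lat n, forall i, (w 0 i)%:~R = d * x 0 i.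
Proof.
exists (\prod_(i < n) (denq (x 0 i))%:~R).
  by apply/prodf_neq0 => i _; rewrite intr_eq0 denq_neq0.
exists (\row_i (numq (x 0 i) * \prod_(k < n | k != i) denq (x 0 k))) => i.
rewrite mxE rmorphM rmorph_prod /= numqE [in RHS](bigD1 i) //= [in RHS]mulrC mulrA; congr (_ * _); apply: eq_bigr => k _; rewrite /=.
Qed.

Lemma perp_or_span n (s : seq (lat n)) (p : lat n) : uniq s ->
  in_span s p \/ exists w, in_perp s w /\ pairing w p != 0.
Proof.
move=> Us.
pose A := \matrix_(i < size s) toQ (nth 0 s i).
case: (boolP (toQ p <= A)%MS) => H.
  left; case/submxP: H => D HD.
  exists (fun r => \sum_(i < size s | nth 0 s i == r) D 0 i).
  rewrite HD mulmx_sum_row (big_nth 0) big_mkord; apply: eq_bigr => i _.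
  rewrite rowK (big_pred1 i) // => k /=.
  by rewrite nth_uniq.
right; rewrite submxE in H.
have /existsP [j Hj] : [exists j, (toQ p *m cokermx A) 0 j != 0].
  case: (pickP (fun j => (toQ p *m cokermx A) 0 j != 0)) => [j Hj|Hn].
    by apply/existsP; exists j.
  exfalso; move/negP: H; apply; apply/eqP/matrixP => a b.
  by rewrite ord1 [RHS]mxE; move: (Hn b) => /= /negbFE/eqP.
pose x := \row_i cokermx A i j.
have [d Hd [w Hw]] := ratvec_scale _ x.
have E : forall v : lat n, (pairing w v)%:~R = d * (toQ v *m cokermx A) 0 j.
  move=> v; rewrite pairing_dotQ /dotQ mxE mulr_sumr; apply: eq_bigr => k _.
  rewrite [toQ w 0 k]mxE Hw mxE; ring.
exists w; split.
  move=> r Hr; have Hi : (index r s < size s)%N by rewrite index_mem.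
  have H0 : (A *m cokermx A) (Ordinal Hi) j = 0 by rewrite mulmx_coker mxE.
  apply/eqP; rewrite -(intr_eq0 rat) E mulf_eq0; apply/orP; right; apply/eqP.
  rewrite -H0 !mxE; apply: eq_bigr => k _; by rewrite /A [X in _ = X * _]mxE /= nth_index.
by rewrite -(intr_eq0 rat) E mulf_neq0.
Qed.

Lemma dual_shift n (rays : seq (lat n)) (u w : lat n) : in_dual rays u ->
  (forall r, r \in rays -> pairing u r = 0 -> 0 <= pairing w r) ->
  in_dual rays ((\sum_(r <- rays) `|pairing w r|) *: u + w).
Proof.
move=> Hu Hw r Hr; rewrite pairingDl pairingZl.
have Hk := le_sum_abs _ rays (fun x => pairing w x) r Hr; simpl in Hk.
move: Hk; set k := \sum_(_ <- _) _ => Hk.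
have Hur := Hu r Hr.
case: (eqVneq (pairing u r) 0) => [E|E]; first by rewrite E mulr0 add0r; exact: Hw.
have H1 : 1 <= pairing u r by lia.
have H2 : - pairing w r <= `|pairing w r| by rewrite -normrN ler_norm.
have H3 : k <= k * pairing u r by rewrite ler_peMr //; apply: le_trans Hk.
lia.
Qed.

Theorem lemma3p3 (n : nat) (rays : seq (lat n)) (e p u : lat n) :
  ray_data rays ->
  p != 0 ->
  homogeneous rays e p ->
  in_dual rays u ->
  (typeI rays e p ->
     (vanishes_on_orbit rays (face_rays rays u) e p <->
      in_span (face_rays rays u) p \/
      exists2 r, r \in face_rays rays u & 0 < pairing e r)) /\
  (typeII rays e p ->
     (vanishes_on_orbit rays (face_rays rays u) e p <->
      exists2 r, r \in face_rays rays u & 0 < pairing e r)).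
Proof.
move=> Hray Hp Hhom Hu.
set t := face_rays rays u.
have Ht : forall r, r \in t -> r \in rays /\ pairing u r = 0.
  by move=> r; rewrite mem_filter => /andP[/eqP -> ->].
have Hut : forall r, r \in rays -> pairing u r = 0 -> r \in t.
  by move=> r Hr H0; rewrite mem_filter H0 eqxx Hr.
have back : forall m, in_dual rays m ->
    (exists2 r, r \in t & 0 < pairing e r) -> ~ in_perp t (m + e).
  move=> m Hm [r Hr Her] Hperp; have := Hperp r Hr; rewrite pairingDl.
  have := Hm r (Ht r Hr).1; lia.
split.
- move=> HI; split.
  + move=> Hv.
    case: (boolP (has (fun r => 0 < pairing e r) t)) => [/hasP [r Hr Her]|Hn].
      by right; exists r.
    left.
    have He0 : forall r, r \in t -> pairing e r = 0.
      move=> r Hr; have := HI r (Ht r Hr).1; move/hasPn: Hn => /(_ r Hr) /=; lia.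
    have Us : uniq t by rewrite filter_uniq //; case: Hray.
    case: (perp_or_span _ t p Us) => // [[w [Hw Hwp]]].
    exfalso.
    have Hw' : forall r, r \in rays -> pairing u r = 0 -> 0 <= pairing w r.
      by move=> r Hr H0; rewrite Hw // Hut.
    have Hd1 := dual_shift _ _ _ _ Hu Hw'.
    move: Hd1; set k := \sum_(r <- rays) `|pairing w r| => Hd1.
    have k0 : 0 <= k by apply: sumr_ge0.
    have key : forall w', in_perp t w' -> in_dual rays (k *: u + w') ->
        pairing (k *: u + w') p = 0.
      move=> w' Hw'p Hd; case: (Hv _ Hd) => // [[_ []]] r Hr.
      by rewrite !pairingDl pairingZl Hw'p // He0 // (Ht r Hr).2 mulr0 !addr0.
    have K1 := key w Hw Hd1.
    have K2 : pairing (k *: u + 0) p = 0.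
      apply: key; first by move=> r _; exact: pairing0l.
      by rewrite addr0 => r Hr; rewrite pairingZl mulr_ge0 // Hu.
    move: K1 K2; rewrite !pairingDl pairingZl pairing0l => K1 K2.
    move/eqP: Hwp; apply; lia.
  + move=> Hc m Hm.
    case: (eqVneq (pairing m p) 0) => [->|Hmp]; [by left|right].
    have Hme : in_dual rays (m + e).
      by move=> r Hr; rewrite pairingDl addr_ge0 ?Hm ?HI.
    split => //.
    case: Hc => [Hspan|Hc]; last exact: back.
    move=> Hperp; move/eqP: Hmp; apply; apply: (span_perp _ _ _ _ Hspan).
    move=> r Hr; have := Hperp r Hr; rewrite pairingDl.
    have := Hm r (Ht r Hr).1; have := HI r (Ht r Hr).1; lia.
- move=> HII; split.
  + move=> Hv.
    case: (boolP (has (fun r => 0 < pairing e r) t)) => [/hasP [r Hr Her]|Hn].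
      by exists r.
    exfalso.
    have Hw' : forall r, r \in rays -> pairing u r = 0 -> 0 <= pairing (- e) r.
      move=> r Hr H0; rewrite pairingNl oppr_ge0.
      by move/hasPn: Hn => /(_ r (Hut r Hr H0)) /=; rewrite real_ltNge ?realE ?lexx //; lia.
    have Hd := dual_shift _ _ _ _ Hu Hw'.
    move: Hd; set k := \sum_(r <- rays) `|pairing (- e) r| => Hd.
    have k0 : 0 <= k by apply: sumr_ge0.
    case: (Hv _ Hd) => [H0|[_ []]].
      case: HII => re Hre [[kp Hkp] Hre1 _].
      have kp0 : kp != 0 by apply: contraNneq Hp => E; rewrite Hkp E scale0r.
      have := Hu re Hre.
      move: H0; rewrite Hkp pairingZr pairingDl pairingZl pairingNl Hre1 => /eqP.
      rewrite mulf_eq0 (negbTE kp0) /= => /eqP H0 H1.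
      have : 0 <= k * pairing u re by rewrite mulr_ge0.
      lia.
    by move=> r Hr; rewrite addrNK pairingZl (Ht r Hr).2 mulr0.
  + move=> Hc m Hm.
    case: (eqVneq (pairing m p) 0) => [->|Hmp]; [by left|right].
    have Hme : in_dual rays (m + e).
      by case: (Hhom m Hm) => // E; rewrite E eqxx in Hmp.
    by split => //; exact: back.
Qed.
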